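(* Let $Z$ and $X$ be as in the context. Then $Z^{-1}=XZX$. In particular, $Z^{-1}\in\mathcal{DR}_0$.
   Context: $\mathbf N=\{1,2,\dots\}$. For $k,m\in\mathbf N$, $\alpha_k(m)$ is the number of $k$-tuples $(m_1,\dots,m_k)$ of integers $\ge2$ with $m_1\cdots m_k=m$. The divisor matrix $D=(d_{i,j})_{i,j\in\mathbf N}$ has $d_{i,j}=1$ if $i\mid j$ and $0$ otherwise. $Z=(\alpha(i,j))_{i,j\in\mathbf N}$ is the matrix whose odd-indexed rows have a single nonzero entry, equal to $1$, on the diagonal, and whose $i$-th row, for $i=2^kd$ with $d$ odd and $k\ge1$, equals the $d$-th row of $(D-I)^k$ (equivalently $\alpha(i,j)=\alpha_k(j/d)$ if $d\mid j$ and $0$ otherwise). $Z$ is upper unitriangular. $v_2(i)$ is the exponent of $2$ in $i$, and $X$ is the diagonal matrix with $(i,i)$ entry $(-1)^{v_2(i)}$. $\mathcal{DR}_0$ is the set of $\mathbf N\times\mathbf N$ complex matrices $A=(a_{i,j})$ for which there exist positive constants $C,c$ with $a_{i,j}=0$ whenever $i>Cj^c$ and $|a_{i,j}|\le Cj^c$ for all $i,j$. *)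

(* Defs.v *)
From HB Require Import structures.
From mathcomp Require Import all_boot all_order all_algebra.
From mathcomp Require Import all_classical all_reals all_analysis.
Set Implicit Arguments. Unset Strict Implicit. Unset Printing Implicit Defensive.
Import Order.TTheory GRing.Theory Num.Theory.
Local Open Scope ring_scope.

(* N x N matrices are functions nat -> nat -> T; only indices >= 1 matter
   (N = {1,2,...}); the values at index 0 are irrelevant. *)
Definition infmx (T : Type) := nat -> nat -> T.

(* alpha_k(m) : number of k-tuples (m_1,...,m_k) of integers >= 2 with
   m_1 * ... * m_k = m.  For m >= 1 each such m_i lies in [2, m], so we
   count tuples with entries in 'I_m.+1. *)
Definition alpha (k m : nat) : nat :=
  #|[pred t : k.-tuple 'I_m.+1 |
       all (fun x : 'I_m.+1 => 2 <= (x : nat))%N t &&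
       ((\prod_(x <- t) (x : nat))%N == m)]|.

Definition v2 (i : nat) : nat := logn 2 i.

Definition Zmx : infmx int := fun i j =>
  let k := v2 i in
  let d := (i %/ 2 ^ k)%N in
  if k == 0%N then (i == j)%:R
  else if (d %| j)%N then (alpha k (j %/ d))%:Z else 0.

Definition Xmx : infmx int := fun i j =>
  if i == j then (-1) ^+ v2 i else 0.

(* The product X Z X (X diagonal, so each entry is a single term). *)
Definition XZXmx : infmx int := fun i j => Xmx i i * Zmx i j * Xmx j j.

Definition Imx : infmx int := fun i j => (i == j)%:R.

(* C = A B as N x N matrices: for all i, j >= 1 the series
   sum_{k >= 1} a_{ik} b_{kj} converges to c_{ij}; here (integer entries)
   we require the partial sums to be eventually equal to c_{ij}, which is
   the situation for products of upper triangular matrices. *)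
Definition mx_prod_is (A B C : infmx int) : Prop :=
  forall i j : nat, (1 <= i)%N -> (1 <= j)%N ->
    exists N : nat, forall M : nat, (N <= M)%N ->
      \sum_(1 <= k < M) A i k * B k j = C i j.

(* DR_0 (for matrices with integer entries, viewed as complex matrices;
   |.| is the usual absolute value): there exist C, c > 0 with
   a_{ij} = 0 whenever i > C j^c and |a_{ij}| <= C j^c for all i, j. *)
Definition inDR0 (R : realType) (A : infmx int) : Prop :=
  exists (C c : R), 0 < C /\ 0 < c /\
    forall i j : nat, (1 <= i)%N -> (1 <= j)%N ->
      ((i%:R > C * (j%:R `^ c)) -> A i j = 0) /\
      ((`|A i j|%:~R : R) <= C * (j%:R `^ c)).

(* Main.v *)
Require Import Defs.
From HB Require Import structures.
From mathcomp Require Import all_boot all_order all_algebra.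
From mathcomp Require Import all_classical all_reals all_analysis.
From mathcomp Require Import zify ring.
Import Order.TTheory GRing.Theory Num.Theory.
Set Implicit Arguments. Unset Strict Implicit. Unset Printing Implicit Defensive.
Fixpoint aa (k m : nat) : nat :=
  match k with
  | 0 => (m == 1)%N
  | k'.+1 => (\sum_(0 <= x < m.+1 | (2 <= x)%N && (x %| m)%N) aa k' (m %/ x))%N
  end.

Lemma aa_S k m : aa k.+1 m = (\sum_(0 <= x < m.+1 | (2 <= x)%N && (x %| m)%N) aa k (m %/ x))%N.
Proof. reflexivity. Qed.

Lemma aa_0 k : aa k 0 = 0%N.
Proof. by elim: k => [|k IH] //; rewrite aa_S big1 // => x _; rewrite div0n. Qed.

Lemma aa0 m : aa 0 m = (m == 1)%N.
Proof. by []. Qed.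

Global Opaque aa.

Definition Fc (k N m : nat) : nat :=
  #|[pred t : k.-tuple 'I_N.+1 |
       all (fun x : 'I_N.+1 => 2 <= (x : nat))%N t &&
       ((\prod_(x <- t) (x : nat))%N == m)]|.

Lemma alphaFc k m : alpha k m = Fc k m m.
Proof. by []. Qed.

Lemma mul_eq_div x p m : (0 < x)%N -> (x * p == m) = (x %| m) && (p == m %/ x).
Proof.
move=> x0; case: (boolP (x %| m)) => /= H.
  by rewrite -{1}(divnK H) mulnC eqn_pmul2r.
apply/negP => /eqP E; move: H; rewrite -E; by rewrite dvdn_mulr.
Qed.

Lemma Fc0 N m : Fc 0 N m = (m == 1)%N.
Proof.
rewrite /Fc -sum1_card big_mkcond /=.
rewrite (eq_bigr (fun _ => (m == 1)%N : nat)); last first.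
  by move=> t _; rewrite inE tuple0 /= big_nil eq_sym; case: (m == 1%N).
by rewrite sum_nat_const card_tuple card_ord expn0 mul1n.
Qed.

Lemma FcS k N m : Fc k.+1 N m =
  (\sum_(x < N.+1 | (2 <= x)%N && (x %| m)%N) Fc k N (m %/ x))%N.
Proof.
rewrite /Fc -sum1_card big_mkcond /=.
rewrite (reindex (fun p : 'I_N.+1 * k.-tuple 'I_N.+1 => [tuple of p.1 :: p.2])) /=; last first.
  exists (fun t : k.+1.-tuple 'I_N.+1 => (thead t, behead_tuple t)).
    by move=> [x t] _ /=; congr pair; apply: val_inj.
  by move=> t _; rewrite [RHS]tuple_eta; apply: val_inj.
rewrite -(pair_bigA _ (fun (x : 'I_N.+1) (t : k.-tuple 'I_N.+1) => if [tuple of x :: t] \in _ then 1%N else 0%N)) /=.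
rewrite [RHS]big_mkcond /=.
apply: eq_bigr => x _.
case: (boolP (2 <= x)%N) => x2 /=; last first.
  by rewrite big1 // => t _; rewrite inE /= (negbTE x2).
rewrite -sum1_card.
case: (boolP (x %| m)) => xm /=.
  rewrite [RHS]big_mkcond; apply: eq_bigr => t _; rewrite !inE /= big_cons x2 /= mul_eq_div ?xm //; lia.
rewrite big1 // => t _; rewrite inE /= big_cons mul_eq_div; last lia.
by rewrite (negbTE xm) !andbF.
Qed.

Lemma Fc_aa k : forall N m, (m <= N)%N -> Fc k N m = aa k m.
Proof.
elim: k => [|k IH] N m mN; first by rewrite Fc0 aa0.
rewrite FcS aa_S -(big_mkord (fun x => (2 <= x)%N && (x %| m)%N) (fun x => Fc k N (m %/ x))).
rewrite (eq_bigr (fun x => aa k (m %/ x))); last first.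
  by move=> x _; apply: IH; apply: leq_trans (leq_div _ _) mN.
rewrite (big_cat_nat _ (n := m.+1)) //= [X in (_ + X)%N]big_nat_cond [X in (_ + X)%N]big1 ?addn0 //.
move=> x /andP[/andP[H1 H2] /andP[H3 H4]].
case: m mN H1 H4 => [|m] mN H1 H4; first by rewrite div0n aa_0.
have := dvdn_leq (ltn0Sn m) H4; lia.
Qed.

Lemma alpha_aa k m : alpha k m = aa k m.
Proof. by rewrite alphaFc Fc_aa. Qed.
Lemma divdiv N y : (0 < N)%N -> (y %| N)%N -> N %/ (N %/ y) = y.
Proof.
move=> N0 yN; rewrite divnA // mulnC mulnK //.
Qed.

Lemma div_reindex N (F : nat -> nat) : (0 < N)%N ->
  (\sum_(0 <= x < N.+1 | (x %| N)%N) F x =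
   \sum_(0 <= x < N.+1 | (x %| N)%N) F (N %/ x))%N.
Proof.
move=> N0.
rewrite -[LHS]big_filter -[RHS]big_filter -(big_map (fun x => N %/ x) xpredT F).
apply: perm_big; apply: uniq_perm.
- by apply: filter_uniq; apply: iota_uniq.
- rewrite map_inj_in_uniq; first by apply: filter_uniq; apply: iota_uniq.
  move=> x1 x2; rewrite !mem_filter => /andP[H1 _] /andP[H2 _] E.
  by rewrite -(divdiv N0 H1) E divdiv.
move=> y; rewrite mem_filter mem_index_iota; apply/idP/mapP.
- move=> /andP[yN /andP[_ yl]]; exists (N %/ y); last by rewrite divdiv.
  by rewrite mem_filter mem_index_iota dvdn_div //= ltnS leq_div.
- move=> [x]; rewrite mem_filter mem_index_iota => /andP[xN _] ->.
  by rewrite dvdn_div //= ltnS leq_div.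
Qed.

Lemma E1 (F : nat -> nat) m : (\sum_(0 <= x < m.+1 | (2 <= x)%N && (x %| m)%N) F x =
   \sum_(0 <= x < m.+1 | (x %| m)%N) (if (2 <= x)%N then F x else 0%N))%N.
Proof. by rewrite big_mkcondl. Qed.

Lemma aa_y k N : aa k.+1 N = (\sum_(0 <= u < N | (u %| N)%N) aa k u)%N.
Proof.
case: N => [|N]; first by rewrite aa_0 big_geq.
rewrite aa_S E1.
rewrite (@div_reindex N.+1 (fun x => if (2 <= x)%N then aa k (N.+1 %/ x) else 0%N)); last by [].
rewrite big_mkcond big_nat_recr //= dvdnn divnn /= addn0.
rewrite [RHS]big_mkcond /=; apply: eq_big_nat => x /andP[_ xN].
case: (boolP (x %| N.+1)%N) => // xd.
rewrite divdiv //.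
have x0 : (0 < x)%N by case: x xd xN => // /dvd0n.
have -> // : (2 <= N.+1 %/ x)%N.
by rewrite -(ltn_pmul2r x0) mul1n divnK.
Qed.
Lemma aa_lt k N : (N < 2 ^ k)%N -> aa k N = 0%N.
Proof.
elim: k N => [|k IH] N H; first by rewrite aa0; case: N H.
rewrite aa_S big1 // => x /andP[x2 xd]; apply: IH.
have h := leq_trunc_div N x; rewrite expnS in H.
have h2 : (N %/ x * 2 <= N %/ x * x)%N by rewrite leq_mul2l x2 orbT.
rewrite -(ltn_pmul2r (isT : (0 < 2)%N)); apply: leq_ltn_trans h2 _.
apply: leq_ltn_trans h _; by rewrite mulnC.
Qed.

Lemma Qsum N n : (n.+1 * (\sum_(0 <= x < n.+2 | (2 <= x)%N) (N %/ x) ^ 2) <= n * N ^ 2)%N.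
Proof.
elim: n => [|n IH]; first by rewrite big_mkcond !big_nat_recr //= big_geq.
rewrite big_mkcond big_nat_recr //= -big_mkcond /=.
set S := (\sum_(0 <= x < n.+2 | (2 <= x)%N) (N %/ x) ^ 2)%N in IH *.
set q := (N %/ n.+2).
have hq : (q * n.+2 <= N)%N by apply: leq_trunc_div.
have hq2 : (q ^ 2 * (n.+2 * n.+2) <= N ^ 2)%N.
  have -> : (q ^ 2 * (n.+2 * n.+2) = (q * n.+2) ^ 2)%N by ring.
  by rewrite leq_exp2r.
rewrite -(leq_pmul2l (isT : (0 < n.+1)%N)).
have e1 : (n.+1 * (n.+2 * (S + q ^ 2)) = n.+2 * (n.+1 * S) + n.+1 * n.+2 * q ^ 2)%N by ring.
rewrite e1.
have e2 : (n.+2 * (n.+1 * S) <= n.+2 * (n * N ^ 2))%N by rewrite leq_mul2l IH orbT.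
have e3 : (n.+1 * n.+2 * q ^ 2 <= N ^ 2)%N.
  apply: leq_trans hq2; rewrite mulnC leq_mul2l; apply/orP; right; apply: leq_mul => //.
have e4 : (n.+2 * (n * N ^ 2) + N ^ 2 = n.+1 * (n.+1 * N ^ 2))%N by ring.
rewrite -e4; exact: leq_add.
Qed.

Lemma Qbound N : (\sum_(0 <= x < N.+1 | (2 <= x)%N) (N %/ x) ^ 2 <= N ^ 2)%N.
Proof.
case: N => [|n]; first by rewrite big_mkcond big_nat_recr //= big_geq.
have := Qsum n.+1 n; set S := (\sum_(_ <= _ < _ | _) _)%N => h.
have h2 : (n.+1 * S <= n.+1 * n.+1 ^ 2)%N.
  apply: leq_trans h _; rewrite leq_mul2r; apply/orP; right; exact: leqnSn.
by rewrite leq_mul2l in h2.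
Qed.

Lemma aa_bound k N : (aa k N <= N ^ 2)%N.
Proof.
elim: k N => [|k IH] N; first by rewrite aa0; case: N => // [[|N]].
rewrite aa_S; apply: leq_trans (Qbound N).
rewrite big_mkcond [X in (_ <= X)%N]big_mkcond /=; apply: leq_sum => x _.
by case: (2 <= x)%N => //=; case: (x %| N)%N => //=.
Qed.
Local Open Scope ring_scope.

Lemma Mreindex (R : nmodType) (c B : nat) (G : nat -> R) : (0 < c)%N ->
  \sum_(0 <= z < c * B | (c %| z)%N) G z = \sum_(0 <= u < B) G (c * u)%N.
Proof.
move=> c0; elim: B => [|B IH]; first by rewrite muln0 !big_geq.
rewrite big_nat_recr //= -IH mulnS addnC (big_cat_nat _ (n := (c * B)%N)) //=; last first.
  by rewrite leq_addr.
congr (_ + _).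
rewrite big_mkcond big_ltn /=; last by rewrite -{1}(addn0 (c * B)%N) ltn_add2l.
rewrite dvdn_mulr // big_nat_cond big1 ?addr0 // => i /andP[/andP[H1 H2] H3].
move: H3; case: (boolP (c %| i)%N) => // /dvdnP [q E]; subst i.
exfalso.
have h1 : (B < q)%N by rewrite -(ltn_pmul2l c0); move: H1; rewrite mulnC; lia.
have h2 : (q < B.+1)%N by rewrite -(ltn_pmul2l c0); move: H2; rewrite mulnC; lia.
lia.
Qed.

Definition od (m : nat) : nat := (m %/ 2 ^ v2 m)%N.

Lemma od_spec m : (0 < m)%N -> (2 ^ v2 m * od m = m)%N.
Proof. by move=> m0; rewrite /od mulnC divnK // pfactor_dvdnn. Qed.

Lemma od_pos m : (0 < m)%N -> (0 < od m)%N.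
Proof. move=> m0; have := od_spec m0; case: (od m) => //; rewrite muln0 => E; by rewrite -E in m0. Qed.

Lemma v2_odd m : odd m -> v2 m = 0%N.
Proof. by move=> om; rewrite /v2 logn_coprime // coprime2n. Qed.

Lemma v2_double m : (0 < m)%N -> v2 (2 * m)%N = (v2 m).+1.
Proof. by move=> m0; rewrite /v2 lognM // logn_prime. Qed.

Lemma od_double m : (0 < m)%N -> od (2 * m)%N = od m.
Proof. by move=> m0; rewrite /od v2_double // expnS divnMl. Qed.

Lemma Zrepr m y : (0 < m)%N ->
  Zmx m y = if (od m %| y)%N then (aa (v2 m) (y %/ od m))%:Z else 0.
Proof.
move=> m0; rewrite /Zmx /=.
case: (boolP (v2 m == 0%N)) => [/eqP E|E].
  have hod : od m = m by rewrite /od E expn0 divn1.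
  rewrite hod E aa0.
  case: (boolP (m %| y)%N) => [/dvdnP [q ->]|H].
    rewrite mulnK //; case: (boolP (q == 1%N)) => [/eqP ->|Hq]; first by rewrite mul1n eqxx.
    case: (boolP (m == q * m)%N) => // /eqP Em; exfalso.
    move: Hq; rewrite -(eqn_pmul2r m0) mul1n -Em eqxx //.
  case: (boolP (m == y)) => // /eqP Em; exfalso; move: H; by rewrite Em dvdnn.
by rewrite alpha_aa.
Qed.
Lemma Z1 m y : (y < m)%N -> Zmx m y = 0.
Proof.
move=> ym; have m0 : (0 < m)%N by case: m ym.
rewrite Zrepr //; case: ifP => // _; rewrite aa_lt //.
by rewrite ltn_divLR ?od_pos // od_spec.
Qed.

Lemma Z2 m y : odd m -> Zmx m y = (m == y)%:R.
Proof. by move=> om; rewrite /Zmx /= v2_odd. Qed.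

Lemma Z0 y : (0 < y)%N -> Zmx 0 y = 0.
Proof. by case: y. Qed.

Lemma Z3 m y : (0 < m)%N ->
  Zmx (2 * m)%N y = \sum_(0 <= z < y | (z %| y)%N) Zmx m z.
Proof.
move=> m0; have m20 : (0 < 2 * m)%N by rewrite muln_gt0.
rewrite Zrepr // od_double // v2_double //.
have d0 := od_pos m0; set d := od m.
under eq_bigr => z _ do rewrite Zrepr //.
case: (boolP (d %| y)%N) => [/dvdnP [N ->]|H]; last first.
  rewrite big1 // => z zy; case: ifP => // dz; exfalso; move: H.
  by rewrite (dvdn_trans dz zy).
rewrite -/d mulnK // aa_y (mulnC N d).
rewrite big_mkcond [RHS]big_mkcond /=.
rewrite (eq_bigr (fun z => if (d %| z)%N then (if (z %| d * N)%N then (aa (v2 m) (z %/ d))%:Z else 0) else 0)); last first.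
  by move=> z _; case: (d %| z)%N; case: (z %| d * N)%N.
rewrite -[RHS]big_mkcond /= Mreindex //.
rewrite (big_morph Posz PoszD (erefl (Posz 0))) big_mkcond /=.
apply: eq_bigr => u _.
rewrite dvdn_pmul2l // mulKn //; by case: (u %| N)%N.
Qed.

Lemma Z3' m y : (0 < y)%N ->
  Zmx (2 * m)%N y = \sum_(0 <= z < y | (z %| y)%N) Zmx m z.
Proof.
move=> y0; case: m => [|m]; last by apply: Z3.
rewrite muln0 Z0 // big1 // => z zy; apply: Z0.
by case: z zy => //; rewrite dvd0n => /eqP E; move: y0; rewrite E.
Qed.
Definition sg (m : nat) : int := (-1) ^+ v2 m.

Lemma sg_odd m : odd m -> sg m = 1.
Proof. by move=> om; rewrite /sg v2_odd. Qed.

Lemma sg_double m : (0 < m)%N -> sg (2 * m)%N = - sg m.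
Proof. by move=> m0; rewrite /sg v2_double // exprS mulN1r. Qed.

Lemma sg_mul a b : (0 < a)%N -> (0 < b)%N -> sg (a * b)%N = sg a * sg b.
Proof. by move=> a0 b0; rewrite /sg /v2 lognM // exprD. Qed.

Lemma sg_sq m : sg m * sg m = 1.
Proof. by rewrite /sg -exprD addnn -mul2n exprM sqrrN expr1n. Qed.

Lemma BC (f : nat -> int) (b B : nat) : (forall t, (b <= t)%N -> f t = 0) -> (b <= B)%N ->
  \sum_(0 <= t < B) f t = \sum_(0 <= t < b) f t.
Proof.
move=> H bB; rewrite (big_cat_nat _ (n := b)) //= [X in _ + X]big_nat_cond [X in _ + X]big1 ?addr0 //.
by move=> t /andP[/andP[h1 _] _]; apply: H.
Qed.

Lemma ind_sum (P : pred nat) (a B : nat) (F : nat -> int) :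
  \sum_(0 <= z < B | P z) (z == a)%:R * F z = if P a && (a < B)%N then F a else 0.
Proof.
elim: B => [|B IH]; first by rewrite big_geq // andbF.
rewrite big_mkcond big_nat_recr //= -big_mkcond IH /=.
case: (ltngtP a B) => H.
- have -> : (a < B.+1)%N by lia.
  by rewrite mul0r if_same addr0.
- have -> : (a < B.+1)%N = false by lia.
  by rewrite mul0r if_same addr0.
- subst B; rewrite ltnSn andbF andbT add0r mul1r; by case: (P a).
Qed.

Definition Lhs (n x : nat) : int := \sum_(0 <= t < x.+1) sg t * Zmx (n * t)%N x.

Lemma Lhs_cut n x b : (0 < n)%N -> (x < b)%N ->
  \sum_(0 <= t < b) sg t * Zmx (n * t)%N x = Lhs n x.
Proof.
move=> n0 xb; rewrite /Lhs (BC (b := x.+1)) // => t xt.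
rewrite Z1 ?mulr0 //; apply: (leq_trans xt); by rewrite leq_pmull.
Qed.

Lemma Shift n x : (0 < n)%N -> (0 < x)%N ->
  Lhs (2 * n)%N x = \sum_(0 <= z < x | (z %| x)%N) Lhs n z.
Proof.
move=> n0 x0; rewrite {1}/Lhs.
under eq_bigr => t _ do rewrite -mulnA Z3' // mulr_sumr.
rewrite exchange_big_nat /=; apply: eq_bigr => z zx.
by rewrite Lhs_cut // ltnS dvdn_leq.
Qed.
Lemma half_sum (G : nat -> int) x :
  \sum_(0 <= z < x | (z %| x)%N) (if (2 %| z)%N then G (z %/ 2)%N else 0) =
  if (2 %| x)%N then \sum_(0 <= w < x %/ 2 | (w %| x %/ 2)%N) G w else 0.
Proof.
case: (boolP (2 %| x)%N) => [/dvdnP [q ->]|H]; last first.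
  rewrite big1 // => z zx; case: ifP => // z2; exfalso; move: H.
  by rewrite (dvdn_trans z2 zx).
rewrite mulnK // big_mkcond /=.
rewrite (eq_bigr (fun z => if (2 %| z)%N then (if (z %| q * 2)%N then G (z %/ 2)%N else 0) else 0)); last first.
  by move=> z _; case: (2 %| z)%N; case: (z %| q * 2)%N.
rewrite -big_mkcond /= mulnC Mreindex // [RHS]big_mkcond /=.
by apply: eq_bigr => w _; rewrite dvdn_pmul2l // mulKn.
Qed.

Definition Kf (n x : nat) : int := Zmx n x - (if (2 %| x)%N then Zmx n (x %/ 2)%N else 0).

Definition Of (n x : nat) : int := \sum_(0 <= t < x.+1 | odd t) ((n * t)%N == x)%:R.

Lemma dvd_pos z x : (0 < x)%N -> (z %| x)%N -> (0 < z)%N.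
Proof. by move=> x0; case: z => //; rewrite dvd0n => /eqP E; move: x0; rewrite E. Qed.

Lemma Key1 n x : (0 < n)%N -> odd n -> (0 < x)%N ->
  Lhs n x = Of n x - \sum_(0 <= z < x | (z %| x)%N) Lhs n z.
Proof.
move=> n0 on x0; rewrite -Shift // {1}/Lhs (bigID odd) /=.
congr (_ + _).
  apply: eq_bigr => t ot; rewrite sg_odd // Z2 ?oddM ?on // mul1r; by case: (_ == _).
have E : \sum_(0 <= t < x.+1 | ~~ odd t) sg t * Zmx (n * t)%N x =
    \sum_(0 <= t < (2 * x.+1)%N | (2 %| t)%N) sg t * Zmx (n * t)%N x.
  rewrite big_mkcond [RHS]big_mkcond; symmetry.
  have hB : forall t, (x.+1 <= t)%N ->
      (if (2 %| t)%N then sg t * Zmx (n * t)%N x else 0) = 0.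
    move=> t xt; case: ifP => // _; rewrite Z1 ?mulr0 //.
    apply: (leq_trans xt); by rewrite leq_pmull.
  rewrite (BC hB); last by rewrite leq_pmull.
  by apply: eq_bigr => t _; rewrite dvdn2.
rewrite E Mreindex // /Lhs -sumrN; apply: eq_bigr => u _.
case: u => [|u]; first by rewrite !muln0 Z0 // !mulr0 oppr0.
rewrite sg_double // mulNr; congr (- (_ * _)); congr Zmx; ring.
Qed.
Lemma Key2 n x : (0 < n)%N -> odd n -> (0 < x)%N ->
  \sum_(0 <= z < x.+1 | (z %| x)%N) Kf n z = Of n x.
Proof.
move=> n0 on x0.
rewrite /Kf big_split /= sumrN.
have e1 : \sum_(0 <= z < x.+1 | (z %| x)%N) Zmx n z = if (n %| x)%N then 1 else 0.
  rewrite (eq_bigr (fun z : nat => (z == n)%:R * 1)); last first.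
    by move=> z _; rewrite Z2 // eq_sym mulr1.
  rewrite ind_sum; case: (boolP (n %| x)%N) => //= H.
  by rewrite ltnS dvdn_leq.
have e2 : \sum_(0 <= z < x.+1 | (z %| x)%N) (if (2 %| z)%N then Zmx n (z %/ 2)%N else 0)
    = if (2 * n %| x)%N then 1 else 0.
  rewrite (eq_bigr (fun z : nat => (z == (2 * n)%N)%:R * 1)); last first.
    move=> z _; rewrite Z2 // mulr1.
    case: (boolP (2 %| z)%N) => [/dvdnP [q ->]|H].
      by rewrite mulnK // mulnC eqn_pmul2l // eq_sym.
    case: (boolP (z == (2 * n)%N)) => // /eqP E; exfalso; move: H; by rewrite E dvdn_mulr.
  rewrite ind_sum; case: (boolP (2 * n %| x)%N) => //= H.
  by rewrite ltnS dvdn_leq.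
rewrite e1 e2 /Of.
case: (boolP (n %| x)%N) => [/dvdnP [q Eq]|H]; last first.
  have -> : (2 * n %| x)%N = false.
    apply/negP => H2; move: H; by rewrite (dvdn_trans (dvdn_mull 2 (dvdnn n)) H2).
  rewrite subr0 big1 // => t _; case: eqP => // E; exfalso; move: H.
  by rewrite -E dvdn_mulr.
rewrite (eq_bigr (fun t : nat => (t == q)%:R * 1)); last first.
  move=> t _; rewrite mulr1 Eq mulnC eqn_pmul2r //.
rewrite ind_sum Eq.
have h : ((2 * n)%N %| (q * n)%N)%N = (2 %| q)%N by rewrite dvdn_pmul2r.
rewrite h dvdn2.
have q0 : (0 < q)%N by move: x0; rewrite Eq muln_gt0 => /andP[].
have -> : (q < (q * n).+1)%N by rewrite ltnS leq_pmulr.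
by case: (odd q); rewrite /= ?subr0 ?subrr.
Qed.

Lemma Key2' n x : (0 < n)%N -> odd n -> (0 < x)%N ->
  Kf n x = Of n x - \sum_(0 <= z < x | (z %| x)%N) Kf n z.
Proof.
move=> n0 on x0; rewrite -Key2 // big_mkcond big_nat_recr //= dvdnn -big_mkcond.
by rewrite addrC addrK.
Qed.
Lemma L_odd n : (0 < n)%N -> odd n -> forall x, (0 < x)%N -> Lhs n x = Kf n x.
Proof.
move=> n0 on x; elim/ltn_ind: x => x IH x0.
rewrite Key1 // Key2' //; congr (_ - _).
rewrite big_nat_cond [RHS]big_nat_cond.
apply: eq_bigr => z /andP[/andP[_ zx] zd]; apply: IH => //; exact: dvd_pos zd.
Qed.

Lemma L n : (0 < n)%N -> forall x, (0 < x)%N -> Lhs n x = Kf n x.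
Proof.
elim/ltn_ind: n => n IH n0.
case: (boolP (odd n)) => on; first exact: L_odd.
have En : n = (2 * n./2)%N by rewrite -{1}(odd_double_half n) (negbTE on) add0n -mul2n.
set h := n./2 in En *.
have h0 : (0 < h)%N by lia.
have hlt : (h < n)%N by lia.
move=> x x0; rewrite En Shift //.
rewrite (eq_bigr (fun z => Kf h z)); last first.
  by move=> z zd; apply: IH => //; exact: dvd_pos zd.
rewrite /Kf big_split /= sumrN Z3 // Z3 // half_sum.
done.
Qed.
Definition W (i j : nat) : int := \sum_(0 <= m < j.+1) Zmx i m * sg m * Zmx m j.

Lemma inner_z z j : (0 < z)%N -> (0 < j)%N ->
  \sum_(0 <= m < j.+1) (if (z %| m)%N && (z < m)%N then sg m * Zmx m j else 0)
  = sg z * - (if (2 %| j)%N then Zmx z (j %/ 2)%N else 0).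
Proof.
move=> z0 j0.
have hB : forall m, (j.+1 <= m)%N ->
    (if (z %| m)%N && (z < m)%N then sg m * Zmx m j else 0) = 0.
  by move=> m jm; case: ifP => // _; rewrite Z1 ?mulr0.
rewrite -(BC hB (B := (z * j.+1)%N)); last by rewrite leq_pmull.
rewrite (eq_bigr (fun m => if (z %| m)%N then (if (z < m)%N then sg m * Zmx m j else 0) else 0)); last first.
  by move=> m _; case: (z %| m)%N.
rewrite -big_mkcond /= Mreindex //.
rewrite (eq_bigr (fun t => if (1 < t)%N then sg z * (sg t * Zmx (z * t)%N j) else 0)); last first.
  move=> t _; rewrite -{1}(muln1 z) ltn_pmul2l //.
  case: ifP => // t1; rewrite sg_mul //; last by case: t t1.
  by rewrite mulrA.
have := L z0 j0; rewrite /Kf /Lhs => E.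
have -> : - (if (2 %| j)%N then Zmx z (j %/ 2)%N else 0) =
    \sum_(0 <= t < j.+1) sg t * Zmx (z * t)%N j - Zmx z j by rewrite E; ring.
rewrite big_ltn // big_ltn /=; last by [].
rewrite [in RHS]big_ltn // [in RHS]big_ltn /=; last by [].
rewrite muln0 Z0 // mulr0 add0r add0r muln1.
rewrite add0r (sg_odd (isT : odd 1)) mul1r [X in (X - _)]addrC addrK mulr_sumr.
by apply: eq_big_nat => t /andP[t2 _]; rewrite t2.
Qed.
Lemma W_cut i j b : (j < b)%N ->
  \sum_(0 <= m < b) Zmx i m * sg m * Zmx m j = W i j.
Proof.
move=> jb; rewrite /W; apply: (BC _ jb) => m jm; by rewrite (Z1 jm) mulr0.
Qed.

Lemma Wid i : (0 < i)%N -> forall j, (0 < j)%N -> W i j = (i == j)%:R * sg i.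
Proof.
elim/ltn_ind: i => i IH i0 j j0.
case: (boolP (odd i)) => oi.
  rewrite /W (eq_bigr (fun m => (m == i)%:R * (sg m * Zmx m j))); last first.
    by move=> m _; rewrite Z2 // eq_sym mulrA.
  rewrite ind_sum /= Z2 //.
  case: (boolP (i == j)) => [/eqP <-|ij]; first by rewrite ltnSn mulr1 mul1r.
  by rewrite mulr0 mul0r if_same.
have Ei : i = (2 * i./2)%N by rewrite -{1}(odd_double_half i) (negbTE oi) add0n -mul2n.
set h := i./2 in Ei *.
have h0 : (0 < h)%N by lia.
have hlt : (h < i)%N by lia.
rewrite /W Ei.
under eq_bigr => m _ do rewrite Z3 // -mulrA mulr_suml.
rewrite (eq_big_nat _ _ (F2 := fun m => \sum_(0 <= z < j.+1)
   (if (z %| m)%N && (z < m)%N then Zmx h z * (sg m * Zmx m j) else 0))); last first.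
  move=> m /andP[_ mj]; rewrite (big_nat_widen _ _ _ _ _ (ltnW mj)) big_mkcond /=.
  by apply: eq_bigr => z _; case: (z %| m)%N; case: (z < m)%N.
rewrite exchange_big_nat /=.
rewrite (eq_bigr (fun z => Zmx h z * (sg z * - (if (2 %| j)%N then Zmx z (j %/ 2)%N else 0)))); last first.
  move=> z _; case: z => [|z].
    rewrite Z1 // mul0r big1 // => m _; case: ifP => // _; by rewrite mul0r.
  rewrite -inner_z // mulr_sumr; apply: eq_bigr => m _.
  by case: ifP => // _; rewrite mulr0.
case: (boolP (2 %| j)%N) => [/dvdnP [q Eq]|H]; last first.
  rewrite big1; last by move=> z _; rewrite oppr0 !mulr0.
  case: (boolP ((2 * h)%N == j)) => [/eqP E|_]; last by rewrite mul0r.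
  by exfalso; move: H; rewrite -E dvdn_mulr.
have q0 : (0 < q)%N by move: j0; rewrite Eq muln_gt0 => /andP[].
rewrite Eq mulnK //.
rewrite (eq_bigr (fun z => - (Zmx h z * sg z * Zmx z q))); last first.
  by move=> z _; rewrite !mulrN mulrA.
rewrite sumrN W_cut; last by rewrite ltnS leq_pmulr.
rewrite IH // sg_double // mulrN [(q * 2)%N]mulnC eqn_pmul2l //.
Qed.
Lemma XZX_eq k j : XZXmx k j = sg k * Zmx k j * sg j.
Proof. by rewrite /XZXmx /Xmx !eqxx. Qed.

Lemma from1 (F : nat -> int) M : (0 < M)%N -> F 0%N = 0 ->
  \sum_(1 <= k < M) F k = \sum_(0 <= k < M) F k.
Proof. by move=> M0 F0; rewrite [RHS]big_ltn // F0 add0r. Qed.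

Lemma sum_cut (F : nat -> int) j M : F 0%N = 0 -> (forall k, (j < k)%N -> F k = 0) ->
  (j < M)%N -> \sum_(1 <= k < M) F k = \sum_(0 <= k < j.+1) F k.
Proof.
move=> F0 Fk jM; rewrite from1 //; last by apply: leq_trans jM.
exact: BC.
Qed.

Lemma part1 : mx_prod_is Zmx XZXmx Imx.
Proof.
move=> i j i0 j0; exists j.+1 => M hM.
rewrite (sum_cut (j := j)) //; first last.
- by move=> k jk; rewrite XZX_eq (Z1 jk) mulr0 mul0r mulr0.
- by rewrite (Z1 i0) mul0r.
rewrite (eq_bigr (fun k => Zmx i k * sg k * Zmx k j * sg j)); last first.
  by move=> k _; rewrite XZX_eq !mulrA.
rewrite -mulr_suml -/(W i j) Wid // /Imx.
case: (boolP (i == j)) => [/eqP ->|_]; first by rewrite mul1r sg_sq.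
by rewrite !mul0r.
Qed.

Lemma part2 : mx_prod_is XZXmx Zmx Imx.
Proof.
move=> i j i0 j0; exists j.+1 => M hM.
rewrite (sum_cut (j := j)) //; first last.
- by move=> k jk; rewrite (Z1 jk) mulr0.
- by rewrite (Z0 j0) mulr0.
rewrite (eq_bigr (fun k => sg i * (Zmx i k * sg k * Zmx k j))); last first.
  by move=> k _; rewrite XZX_eq !mulrA.
rewrite -mulr_sumr -/(W i j) Wid // /Imx.
case: (boolP (i == j)) => [/eqP ->|_]; first by rewrite mul1r sg_sq.
by rewrite !mul0r mulr0.
Qed.

Lemma Zbound i j : (0 < i)%N -> exists n : nat, Zmx i j = n%:Z /\ (n <= j ^ 2)%N.
Proof.
move=> i0; rewrite Zrepr //; case: ifP => _; last by exists 0%N.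
exists (aa (v2 i) (j %/ od i)); split => //.
apply: leq_trans (aa_bound _ _) _; by rewrite leq_exp2r // leq_div.
Qed.

Lemma part3 (R : realType) : inDR0 R XZXmx.
Proof.
exists 1, 2; split => //; split => //.
move=> i j i0 j0.
have e : (j%:R `^ 2 : R) = (j ^ 2)%:R by rewrite -[2 in LHS]/(2%:R) powR_mulrn // natrX.
rewrite mul1r e; split.
  move=> H; rewrite XZX_eq (Z1 _) ?mulr0 ?mul0r //.
  rewrite ltr_nat in H; apply: leq_trans H; by rewrite ltnS -mulnn -{1}(muln1 j) leq_mul2l j0 orbT.
have [n [En nb]] := Zbound j i0.
rewrite XZX_eq En !normrM /sg !normr_sign mul1r mulr1.
by rewrite [X in X%:~R]/= -[X in (X <= _)]/(n%:R : R) ler_nat.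
Qed.

Theorem theorem4p6 (R : realType) :
  mx_prod_is Zmx XZXmx Imx /\ mx_prod_is XZXmx Zmx Imx /\ inDR0 R XZXmx.
Proof. by split; [exact: part1 | split; [exact: part2 | exact: part3]]. Qed.
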